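(* Let $I\subset\mathbb{R}$ be an open interval and $\lambda:I\to\mathbb{R}$ a non-constant positive smooth function, and fix a choice of sign $\pm$. Let $\tilde M(1-\lambda^2,2(1\pm\lambda))$ be the contact metric $3$-manifold described in the context. For constants $b\in\mathbb{R}$ and $c\in I$, consider the curve $\gamma_{\{b,c\}}(s)=(b,s,c)$ in $\tilde M(1-\lambda^2,2(1\pm\lambda))$ (it is parametrized by arclength, is a Legendre curve, and its unit tangent is $e_2$). Then $\gamma_{\{b,c\}}$ is proper biharmonic if and only if $\lambda'(c)\neq 0$ and $$\Big(\lambda\lambda''-2(\lambda')^2-8\lambda^2(1\pm\lambda)\Big)\Big|_{z=c}=0,$$ where $'$ denotes $d/dz$ and the sign $\pm$ is the same as the one in $\tilde M(1-\lambda^2,2(1\pm\lambda))$.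
   Context: Definition of $\tilde M(1-\lambda^2,2(1\pm\lambda))$: Let $\lambda:I\to\mathbb{R}$ be a non-constant positive smooth function on an open interval $I$, $\lambda'=d\lambda/dz$. On $\tilde M^3=\mathbb{R}^2\times I\subset\mathbb{R}^3$ with coordinates $(x,y,z)$ consider the vector fields $e_1=\partial_x$, $e_2=\partial_y$, $e_3=(\pm 2y+f(z))\partial_x+\big(2\lambda x-\frac{\lambda'}{2\lambda}y+h(z)\big)\partial_y+\partial_z$, where $f,h$ are arbitrary smooth functions of $z$. Let $g$ be the Riemannian metric with $g(e_i,e_j)=\delta_{ij}$, $\xi=e_1$, $\eta$ the $1$-form dual to $e_1$, and $\phi$ the $(1,1)$-tensor with $\phi e_1=0$, $\phi e_2=\pm e_3$, $\phi e_3=\mp e_2$ (all double signs correspond to the sign in $\pm 2y$). This is a contact metric manifold which is a generalized $(\kappa,\mu)$-manifold with $\kappa=1-\lambda^2$, $\mu=2(1\pm\lambda)$, i.e. its curvature tensor $\tilde R(X,Y)=[\tilde\nabla_X,\tilde\nabla_Y]-\tilde\nabla_{[X,Y]}$ satisfies $\tilde R(X,Y)\xi=(\kappa I+\mu h)(\eta(Y)X-\eta(X)Y)$, where $2h$ is the Lie derivative of $\phi$ along $\xi$. A curve parametrized by arclength in a contact metric $3$-manifold is Legendre if $\eta(\gamma')=0$. A smooth map $f:M\to\tilde M$ is biharmonic if its bitension field $\tau_2(f)=-\Delta_f\tau(f)+\mathrm{trace}\,\tilde R(\tau(f),df)df$ vanishes, where $\tau(f)$ is the tension field and $\Delta_f=-\mathrm{trace}(\nabla^f\nabla^f-\nabla^f_\nabla)$;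 an isometric immersion is biharmonic if it is a biharmonic map, and proper biharmonic if it is biharmonic and not minimal (for a curve: not a geodesic). For a curve parametrized by arclength with unit tangent $T$, biharmonicity is $\tilde\nabla_T\tilde\nabla_T\tilde\nabla_T T+\tilde R(\tilde\nabla_T T,T)T=0$. *)

(* Defs.v *)
From Stdlib Require Import Reals Lra Classical ClassicalEpsilon.
Open Scope R_scope.

(* [deriv f x] is THE derivative of f at x when f is differentiable at x
   (derivable_pt_lim has unique limits), and 0 otherwise. *)
Definition deriv (f : R -> R) (x : R) : R :=
  match excluded_middle_informative (exists l, derivable_pt_lim f x l) with
  | left H => proj1_sig (constructive_indefinite_description _ H)
  | right _ => 0
  end.

(* lo = None means -infinity, hi = None means +infinity. *)
Definition in_I (lo hi : option R) (z : R) : Prop :=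
  (match lo with None => True | Some a => a < z end) /\
  (match hi with None => True | Some b => z < b end).

Definition interval_nonempty (lo hi : option R) : Prop :=
  match lo, hi with Some a, Some b => a < b | _, _ => True end.

Definition smooth_on (lo hi : option R) (f : R -> R) : Prop :=
  forall (n : nat) (z : R), in_I lo hi z ->
    derivable_pt_lim (Nat.iter n deriv f) z (Nat.iter (S n) deriv f z).

(* Points and vectors of R^3 are [nat -> R], coordinates 0,1,2 = x,y,z. *)
Definition Vec := nat -> R.
Definition sum3 (F : nat -> R) : R := F 0%nat + F 1%nat + F 2%nat.

Definition upd (p : Vec) (a : nat) (t : R) : Vec :=
  fun k => if Nat.eqb k a then t else p k.

Definition pd (a : nat) (F : Vec -> R) (p : Vec) : R :=
  deriv (fun t => F (upd p a t)) (p a).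

Definition pt (x y z : R) : Vec :=
  fun k => match k with 0%nat => x | 1%nat => y | _ => z end.

Definition cof3 (M : nat -> nat -> R) (i j : nat) : R :=
  M ((i+1) mod 3)%nat ((j+1) mod 3)%nat * M ((i+2) mod 3)%nat ((j+2) mod 3)%nat
  - M ((i+1) mod 3)%nat ((j+2) mod 3)%nat * M ((i+2) mod 3)%nat ((j+1) mod 3)%nat.
Definition det3 (M : nat -> nat -> R) : R := sum3 (fun j => M 0%nat j * cof3 M 0%nat j).
Definition inv3 (M : nat -> nat -> R) (a b : nat) : R := cof3 M b a / det3 M.

(* sg = +1 or -1 is the sign choice.  E i p = coordinate components of the
   frame vector e_{i+1} at the point p (i = 0,1,2). *)
Definition frame (sg : R) (lam f h : R -> R) (i : nat) (p : Vec) : Vec :=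
  match i with
  | 0%nat => pt 1 0 0
  | 1%nat => pt 0 1 0
  | _ => pt (sg * 2 * p 1%nat + f (p 2%nat))
            (2 * lam (p 2%nat) * p 0%nat
               - deriv lam (p 2%nat) / (2 * lam (p 2%nat)) * p 1%nat + h (p 2%nat))
            1
  end.

(* matrix whose columns are the frame vectors; its inverse has the dual
   coframe theta^i as rows *)
Definition frame_mat sg lam f h (p : Vec) (a i : nat) : R := frame sg lam f h i p a.

(* Riemannian metric g with g(e_i,e_j) = delta_ij, in coordinates:
   g_ab = sum_i theta^i_a theta^i_b *)
Definition metric sg lam f h (a b : nat) (p : Vec) : R :=
  sum3 (fun i => inv3 (frame_mat sg lam f h p) i a * inv3 (frame_mat sg lam f h p) i b).

Definition metric_inv sg lam f h (a b : nat) (p : Vec) : R :=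
  sum3 (fun i => frame sg lam f h i p a * frame sg lam f h i p b).

(* Christoffel symbols of the Levi-Civita connection:
   nabla_{d_i} d_j = sum_k Gamma^k_ij d_k *)
Definition christoffel sg lam f h (k i j : nat) (p : Vec) : R :=
  / 2 * sum3 (fun l => metric_inv sg lam f h k l p *
     (pd i (metric sg lam f h j l) p + pd j (metric sg lam f h i l) p
      - pd l (metric sg lam f h i j) p)).

(* Curvature R(X,Y) = [nabla_X, nabla_Y] - nabla_[X,Y]:
   R(d_i, d_j) d_k = sum_l riem l k i j d_l *)
Definition riem sg lam f h (l k i j : nat) (p : Vec) : R :=
  pd i (christoffel sg lam f h l j k) p - pd j (christoffel sg lam f h l i k) p
  + sum3 (fun m => christoffel sg lam f h m j k p * christoffel sg lam f h l i m p
                   - christoffel sg lam f h m i k p * christoffel sg lam f h l j m p).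

Definition curv sg lam f h (X Y Z : Vec) (p : Vec) : Vec :=
  fun l => sum3 (fun i => sum3 (fun j => sum3 (fun k =>
             X i * Y j * Z k * riem sg lam f h l k i j p))).

Definition velocity (gamma : R -> Vec) (s : R) : Vec :=
  fun a => deriv (fun u => gamma u a) s.

Definition cov_along sg lam f h (gamma : R -> Vec) (V : R -> Vec) (s : R) : Vec :=
  fun a => deriv (fun u => V u a) s
    + sum3 (fun i => sum3 (fun j =>
        christoffel sg lam f h a i j (gamma s) * velocity gamma s i * V s j)).

(* biharmonic equation for an arclength-parametrized curve with T = gamma':
   nabla_T nabla_T nabla_T T + R(nabla_T T, T) T = 0 *)
Definition biharmonic_curve sg lam f h (gamma : R -> Vec) : Prop :=
  let T := velocity gamma in
  let nT := cov_along sg lam f h gamma T in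
  let n2T := cov_along sg lam f h gamma nT in
  let n3T := cov_along sg lam f h gamma n2T in
  forall (s : R) (a : nat), (a < 3)%nat ->
    n3T s a + curv sg lam f h (nT s) (T s) (T s) (gamma s) a = 0.

Definition geodesic_curve sg lam f h (gamma : R -> Vec) : Prop :=
  forall (s : R) (a : nat), (a < 3)%nat ->
    cov_along sg lam f h gamma (velocity gamma) s a = 0.

Definition proper_biharmonic_curve sg lam f h gamma : Prop :=
  biharmonic_curve sg lam f h gamma /\ ~ geodesic_curve sg lam f h gamma.

Definition gamma_bc (b c : R) (s : R) : Vec := pt b s c.

(* Main.v *)
Require Import Defs.
From Stdlib Require Import Reals Lra Lia ZArith FunctionalExtensionality Classical ClassicalEpsilon.
Open Scope R_scope.
Inductive atom := AX | AY | AZ | AR | AS | AF (k n : nat).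
Inductive expr := V (a : atom) | K (z : Z) | Hf | Add (x y : expr) | Mul (x y : expr) | Opp (x : expr).

Fixpoint eval (env : atom -> R) (e : expr) : R :=
  match e with
  | V a => env a | K z => IZR z | Hf => / 2
  | Add x y => eval env x + eval env y
  | Mul x y => eval env x * eval env y
  | Opp x => - eval env x end.

Definition sadd (x y : expr) : expr :=
  match x with K Z0 => y | _ => match y with K Z0 => x | _ => Add x y end end.
Definition smul (x y : expr) : expr :=
  match x with K Z0 => K Z0 | K (Zpos xH) => y
  | _ => match y with K Z0 => K Z0 | K (Zpos xH) => x | _ => Mul x y end end.
Definition sopp (x : expr) : expr := match x with K Z0 => K Z0 | _ => Opp x end.

Fixpoint dexpr (dv : atom -> expr) (e : expr) : expr :=
  match e with
  | V a => dv a | K _ => K 0 | Hf => K 0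
  | Add x y => sadd (dexpr dv x) (dexpr dv y)
  | Mul x y => sadd (smul (dexpr dv x) y) (smul x (dexpr dv y))
  | Opp x => sopp (dexpr dv x) end.

Definition datom (a : nat) (v : atom) : expr :=
  match a with
  | O => match v with AX => K 1 | _ => K 0 end
  | S O => match v with AY => K 1 | _ => K 0 end
  | _ => match v with AZ => K 1
         | AR => Opp (Mul (Mul (K 2) (V (AF 0 1))) (Mul (V AR) (V AR)))
         | AF k n => V (AF k (S n)) | _ => K 0 end end.

Definition AE := Add (Mul (Mul (V AS) (K 2)) (V AY)) (V (AF 1 0)).
Definition BE := Add (Add (Mul (Mul (K 2) (V (AF 0 0))) (V AX))
                       (Opp (Mul (Mul (V (AF 0 1)) (V AR)) (V AY)))) (V (AF 2 0)).

Definition GmE (j l : nat) : expr :=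
  match j, l with
  | 0, 0 => K 1 | 0, 1 => K 0 | 1, 0 => K 0 | 1, 1 => K 1
  | 0, _ => Opp AE | _, 0 => Opp AE | 1, _ => Opp BE | _, 1 => Opp BE
  | _, _ => Add (Add (K 1) (Mul AE AE)) (Mul BE BE) end.
Definition GiE (j l : nat) : expr :=
  match j, l with
  | 0, 0 => Add (K 1) (Mul AE AE) | 0, 1 => Mul AE BE | 1, 0 => Mul AE BE
  | 1, 1 => Add (K 1) (Mul BE BE)
  | 0, _ => AE | _, 0 => AE | 1, _ => BE | _, 1 => BE
  | _, _ => K 1 end.

Definition sum3E (F : nat -> expr) : expr := sadd (sadd (F 0%nat) (F 1%nat)) (F 2%nat).
Definition DgE (i j l : nat) := dexpr (datom i) (GmE j l).
Definition ChrE (k i j : nat) : expr :=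
  smul Hf (sum3E (fun l => smul (GiE k l)
     (sadd (sadd (DgE i j l) (DgE j i l)) (sopp (DgE l i j))))).
Definition RiemE (l k i j : nat) : expr :=
  sadd (sadd (dexpr (datom i) (ChrE l j k)) (sopp (dexpr (datom j) (ChrE l i k))))
   (sum3E (fun m => sadd (smul (ChrE m j k) (ChrE l i m)) (sopp (smul (ChrE m i k) (ChrE l j m))))).
Definition coordE (a : nat) : expr := match a with 0 => V AX | 1 => V AY | _ => V AZ end.
Definition TE (a : nat) : expr := dexpr (datom 1) (coordE a).
Definition CovE (WE : nat -> expr) (a : nat) : expr :=
  sadd (dexpr (datom 1) (WE a))
   (sum3E (fun i => sum3E (fun j => smul (smul (ChrE a i j) (TE i)) (WE j)))).
Definition CurvE (XE YE ZE : nat -> expr) (l : nat) : expr :=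
  sum3E (fun i => sum3E (fun j => sum3E (fun k =>
     smul (smul (smul (XE i) (YE j)) (ZE k)) (RiemE l k i j)))).
Definition NE := CovE TE.
Definition BIH (a : nat) : expr := sadd (CovE (CovE NE) a) (CurvE NE TE TE a).
Definition qE := Mul (V (AF 0 1)) (V AR).
Definition KE := Add (Add (Add (dexpr (datom 2) qE) (Opp (Mul (K 2) (Mul qE qE)))) (K (-4)))
                  (Opp (Mul (Mul (K 4) (V AS)) (V (AF 0 0)))).
Definition E3 (a : nat) : expr := match a with 0 => AE | 1 => BE | _ => K 1 end.
Definition TGT (a : nat) : expr := Mul (Mul qE KE) (E3 a).


Lemma deriv_eq f x l : derivable_pt_lim f x l -> deriv f x = l.
Proof.
  intro H. unfold deriv. destruct excluded_middle_informative as [e|n].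
  - destruct (constructive_indefinite_description _ e) as [l' Hl']; simpl.
    exact (uniqueness_limite f x l' l Hl' H).
  - exfalso; apply n; exists l; exact H.
Qed.

Lemma deriv_ext f g x : (forall u, f u = g u) -> deriv f x = deriv g x.
Proof. intro H. replace f with g; [reflexivity|]. symmetry; apply functional_extensionality; exact H. Qed.

Lemma dpl_ext f g x l : (forall u, f u = g u) -> derivable_pt_lim g x l -> derivable_pt_lim f x l.
Proof. intros H. replace f with g; [auto|]. symmetry; apply functional_extensionality; exact H. Qed.

Lemma eval_sadd env x y : eval env (sadd x y) = eval env x + eval env y.
Proof.
  destruct x as [a|[|p|p]| | | |]; destruct y as [b|[|q|q]| | | |]; simpl; ring.
Qed.
Lemma eval_smul env x y : eval env (smul x y) = eval env x * eval env y.
Proof.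
  destruct x as [a|[|[p|p|]|p]| | | |]; destruct y as [b|[|[q|q|]|q]| | | |]; simpl; ring.
Qed.
Lemma eval_sopp env x : eval env (sopp x) = - eval env x.
Proof. destruct x as [a|[|p|p]| | | |]; simpl; ring. Qed.

Lemma eval_ext env1 env2 e : (forall v, env1 v = env2 v) -> eval env1 e = eval env2 e.
Proof. intro H; induction e; simpl; congruence. Qed.

Lemma dexpr_ok (E : R -> atom -> R) x env0 dv :
  (forall v, E x v = env0 v) ->
  (forall v, derivable_pt_lim (fun t => E t v) x (eval env0 (dv v))) ->
  forall e, derivable_pt_lim (fun t => eval (E t) e) x (eval env0 (dexpr dv e)).
Proof.
  intros H0 H e; induction e; simpl.
  - apply H.
  - exact (derivable_pt_lim_const (IZR z) x).
  - exact (derivable_pt_lim_const (/2) x).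
  - rewrite eval_sadd. exact (derivable_pt_lim_plus _ _ _ _ _ IHe1 IHe2).
  - rewrite eval_sadd, !eval_smul.
    pose proof (derivable_pt_lim_mult _ _ _ _ _ IHe1 IHe2) as M.
    cbv beta in M. rewrite (eval_ext (E x) env0 e1), (eval_ext (E x) env0 e2) in M by exact H0.
    exact M.
  - rewrite eval_sopp. exact (derivable_pt_lim_opp _ _ _ IHe).
Qed.

Lemma dpl_loc f g x l :
  derivable_pt_lim g x l ->
  (exists d, 0 < d /\ forall t, Rabs (t - x) < d -> f t = g t) ->
  derivable_pt_lim f x l.
Proof.
  intros Hg [d [Hd He]] eps Heps. destruct (Hg eps Heps) as [del Hdel].
  assert (Hm : 0 < Rmin del d) by (apply Rmin_pos; [apply cond_pos|exact Hd]).
  exists (mkposreal _ Hm). intros hh Hh0 Hh. simpl in Hh.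
  rewrite !He.
  - apply Hdel; auto. apply Rlt_le_trans with (1 := Hh). apply Rmin_l.
  - unfold Rminus; rewrite Rplus_opp_r, Rabs_R0; exact Hd.
  - replace (x + hh - x) with hh by ring. apply Rlt_le_trans with (1 := Hh). apply Rmin_r.
Qed.

Lemma in_I_open lo hi z : in_I lo hi z ->
  exists d, 0 < d /\ forall t, Rabs (t - z) < d -> in_I lo hi t.
Proof.
  unfold in_I; intros [H1 H2].
  set (d1 := match lo with None => 1 | Some a => z - a end).
  set (d2 := match hi with None => 1 | Some b => b - z end).
  assert (P1 : 0 < d1) by (unfold d1; destruct lo; lra).
  assert (P2 : 0 < d2) by (unfold d2; destruct hi; lra).
  exists (Rmin d1 d2). split; [apply Rmin_pos; auto|].
  intros t Ht. pose proof (Rmin_l d1 d2). pose proof (Rmin_r d1 d2).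
  apply Rabs_def2 in Ht. destruct Ht as [Ha Hb].
  split.
  - destruct lo as [a|]; [|exact I]. unfold d1 in *. lra.
  - destruct hi as [b|]; [|exact I]. unfold d2 in *. lra.
Qed.

Definition fn (lam f h : R -> R) (k : nat) : R -> R :=
  match k with 0%nat => lam | 1%nat => f | _ => h end.
Definition env3 (sg : R) (lam f h : R -> R) (x y z : R) (v : atom) : R :=
  match v with
  | AX => x | AY => y | AZ => z | AR => / (2 * lam z) | AS => sg
  | AF k n => Nat.iter n deriv (fn lam f h k) z end.
Definition envp sg lam f h (p : Vec) := env3 sg lam f h (p 0%nat) (p 1%nat) (p 2%nat).

Definition Hyp lo hi (lam f h : R -> R) : Prop :=
  smooth_on lo hi lam /\ smooth_on lo hi f /\ smooth_on lo hi h /\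
  (forall z, in_I lo hi z -> 0 < lam z).

Lemma dpl_id x : derivable_pt_lim (fun t => t) x 1.
Proof. exact (derivable_pt_lim_id x). Qed.
Lemma dpl_cst a x : derivable_pt_lim (fun _ => a) x 0.
Proof. exact (derivable_pt_lim_const a x). Qed.

Lemma lineX sg lam f h x y z v :
  derivable_pt_lim (fun t => env3 sg lam f h t y z v) x (eval (env3 sg lam f h x y z) (datom 0 v)).
Proof. destruct v; simpl; first [apply dpl_id | apply dpl_cst]. Qed.
Lemma lineY sg lam f h x y z v :
  derivable_pt_lim (fun t => env3 sg lam f h x t z v) y (eval (env3 sg lam f h x y z) (datom 1 v)).
Proof. destruct v; simpl; first [apply dpl_id | apply dpl_cst]. Qed.
Lemma lineZ sg lo hi lam f h x y z v : Hyp lo hi lam f h -> in_I lo hi z ->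
  derivable_pt_lim (fun t => env3 sg lam f h x y t v) z (eval (env3 sg lam f h x y z) (datom 2 v)).
Proof.
  intros [Hl [Hf [Hh Hp]]] Hz. destruct v; simpl; try first [apply dpl_id | apply dpl_cst].
  -
    assert (D : derivable_pt_lim (fun t => 2 * lam t) z (2 * deriv lam z)).
    { apply (dpl_ext _ (mult_fct (fct_cte 2) lam)); [intro; reflexivity|].
      replace (2 * deriv lam z) with (0 * lam z + 2 * deriv lam z) by ring.
      apply derivable_pt_lim_mult; [apply derivable_pt_lim_const|exact (Hl 0%nat z Hz)]. }
    pose proof (Hp z Hz) as Hpz.
    pose proof (derivable_pt_lim_div (fct_cte 1) (fun t => 2 * lam t) z 0 _
                 (derivable_pt_lim_const 1 z) D) as Q.
    assert (NZ : (fun t => 2 * lam t) z <> 0) by (simpl; lra).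
    specialize (Q NZ). cbv beta in Q.
    replace (- (2 * deriv lam z * (/ (2 * lam z) * / (2 * lam z))))
        with ((0 * (2 * lam z) - 2 * deriv lam z * fct_cte 1 z) / (2 * lam z)²)
      by (unfold fct_cte, Rsqr; field; lra).
    apply (dpl_ext _ _ _ _ (fun u => eq_sym (Rmult_1_l (/ (2 * lam u))))). exact Q.
  - destruct k as [|[|k]]; simpl; [apply (Hl n z Hz)|apply (Hf n z Hz)|apply (Hh n z Hz)].
Qed.

Definition rep sg lo hi lam f h (F : Vec -> R) (FE : expr) : Prop :=
  forall q, in_I lo hi (q 2%nat) -> F q = eval (envp sg lam f h q) FE.

Ltac ind3 i := destruct i as [|[|[|i]]]; [ | | | exfalso; lia].

Lemma pd_eval sg lo hi lam f h F FE a p : Hyp lo hi lam f h -> (a < 3)%nat ->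
  in_I lo hi (p 2%nat) -> rep sg lo hi lam f h F FE ->
  pd a F p = eval (envp sg lam f h p) (dexpr (datom a) FE).
Proof.
  intros HH Ha Hp HF. unfold pd. apply deriv_eq.
  apply dpl_loc with (g := fun t => eval (envp sg lam f h (upd p a t)) FE).
  - apply dexpr_ok.
    + intro v. ind3 a; destruct v; reflexivity.
    + intro v. ind3 a; unfold envp, upd; simpl.
      * apply lineX.
      * apply lineY.
      * apply (lineZ sg lo hi); auto.
  - ind3 a.
    + exists 1; split; [lra|]. intros t _. apply HF. exact Hp.
    + exists 1; split; [lra|]. intros t _. apply HF. exact Hp.
    + destruct (in_I_open _ _ _ Hp) as [d [Hd Ht]]. exists d; split; [exact Hd|].
      intros t Htd. apply HF. unfold upd; simpl. apply Ht. exact Htd.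
Qed.

Lemma det_frame sg lam f h p : det3 (frame_mat sg lam f h p) = 1.
Proof. unfold det3, cof3, sum3, frame_mat, frame, pt; simpl. ring. Qed.

Lemma metric_rep sg lam f h j l q : (j < 3)%nat -> (l < 3)%nat ->
  metric sg lam f h j l q = eval (envp sg lam f h q) (GmE j l).
Proof.
  intros Hj Hl. unfold metric, inv3. rewrite det_frame.
  ind3 j; ind3 l; unfold cof3, sum3, frame_mat, frame, pt, envp, env3, GmE, AE, BE; simpl;
  unfold Rdiv; rewrite ?Rinv_1; ring.
Qed.

Lemma metric_inv_rep sg lam f h j l q : (j < 3)%nat -> (l < 3)%nat ->
  metric_inv sg lam f h j l q = eval (envp sg lam f h q) (GiE j l).
Proof.
  intros Hj Hl. unfold metric_inv.
  ind3 j; ind3 l; unfold sum3, frame, pt, envp, env3, GiE, AE, BE; simpl;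
  unfold Rdiv; ring.
Qed.

Lemma pd_metric sg lo hi lam f h a j l q : Hyp lo hi lam f h ->
  (a < 3)%nat -> (j < 3)%nat -> (l < 3)%nat -> in_I lo hi (q 2%nat) ->
  pd a (metric sg lam f h j l) q = eval (envp sg lam f h q) (DgE a j l).
Proof.
  intros HH Ha Hj Hl Hq. unfold DgE. apply (pd_eval sg lo hi); auto.
  intros r _. apply metric_rep; auto.
Qed.

Lemma chr_rep sg lo hi lam f h k i j : Hyp lo hi lam f h ->
  (k < 3)%nat -> (i < 3)%nat -> (j < 3)%nat ->
  rep sg lo hi lam f h (christoffel sg lam f h k i j) (ChrE k i j).
Proof.
  intros HH Hk Hi Hj q Hq. unfold christoffel, ChrE, sum3E, sum3.
  cbv beta. repeat rewrite ?eval_smul, ?eval_sadd, ?eval_sopp.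
  rewrite !(metric_inv_rep sg lam f h k) by lia.
  rewrite !(pd_metric sg lo hi lam f h) by (auto; lia).
  reflexivity.
Qed.

Lemma pd_chr sg lo hi lam f h a k i j q : Hyp lo hi lam f h ->
  (a < 3)%nat -> (k < 3)%nat -> (i < 3)%nat -> (j < 3)%nat -> in_I lo hi (q 2%nat) ->
  pd a (christoffel sg lam f h k i j) q = eval (envp sg lam f h q) (dexpr (datom a) (ChrE k i j)).
Proof. intros. apply (pd_eval sg lo hi); auto. apply chr_rep; auto. Qed.

Lemma riem_rep sg lo hi lam f h l k i j : Hyp lo hi lam f h ->
  (l < 3)%nat -> (k < 3)%nat -> (i < 3)%nat -> (j < 3)%nat ->
  rep sg lo hi lam f h (riem sg lam f h l k i j) (RiemE l k i j).
Proof.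
  intros HH Hl Hk Hi Hj q Hq. unfold riem, RiemE, sum3E, sum3.
  cbv beta. repeat rewrite ?eval_smul, ?eval_sadd, ?eval_sopp.
  rewrite !(pd_chr sg lo hi lam f h) by (auto; lia).
  rewrite !(chr_rep sg lo hi lam f h) by (auto; lia).
  reflexivity.
Qed.

Definition crep sg lam f h (b c : R) (W : R -> Vec) (WE : nat -> expr) : Prop :=
  forall u a, (a < 3)%nat -> W u a = eval (env3 sg lam f h b u c) (WE a).

Lemma curve_deriv sg lam f h b c E s :
  deriv (fun u => eval (env3 sg lam f h b u c) E) s = eval (env3 sg lam f h b s c) (dexpr (datom 1) E).
Proof.
  apply deriv_eq. apply dexpr_ok; [intro; reflexivity|]. intro v. apply lineY.
Qed.

Lemma vel_rep sg lam f h b c : crep sg lam f h b c (velocity (gamma_bc b c)) TE.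
Proof.
  intros u a Ha. unfold velocity, TE. rewrite <- curve_deriv. apply deriv_ext.
  intro w. ind3 a; reflexivity.
Qed.

Lemma cov_rep sg lo hi lam f h b c W WE : Hyp lo hi lam f h -> in_I lo hi c ->
  crep sg lam f h b c W WE ->
  crep sg lam f h b c (cov_along sg lam f h (gamma_bc b c) W) (CovE WE).
Proof.
  intros HH Hc HW u a Ha. unfold cov_along, CovE, sum3E, sum3. cbv beta.
  repeat rewrite ?eval_smul, ?eval_sadd, ?eval_sopp.
  rewrite (deriv_ext _ (fun w => eval (env3 sg lam f h b w c) (WE a))) by (intro; apply HW; auto).
  rewrite curve_deriv.
  rewrite !(chr_rep sg lo hi lam f h) by (auto; lia).
  rewrite !(vel_rep sg lam f h b c) by lia.
  rewrite !(HW u) by lia.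
  reflexivity.
Qed.

Lemma curv_rep sg lo hi lam f h b c X XE Y YE Z ZE : Hyp lo hi lam f h -> in_I lo hi c ->
  crep sg lam f h b c X XE -> crep sg lam f h b c Y YE -> crep sg lam f h b c Z ZE ->
  forall u a, (a < 3)%nat ->
  curv sg lam f h (X u) (Y u) (Z u) (gamma_bc b c u) a
   = eval (env3 sg lam f h b u c) (CurvE XE YE ZE a).
Proof.
  intros HH Hc HX HY HZ u a Ha. unfold curv, CurvE, sum3E, sum3. cbv beta.
  repeat rewrite ?eval_smul, ?eval_sadd, ?eval_sopp.
  rewrite !(riem_rep sg lo hi lam f h) by (auto; lia).
  rewrite !(HX u), !(HY u), !(HZ u) by lia.
  reflexivity.
Qed.

Ltac crunch e := let t := eval vm_compute in e in change e with t.

Lemma bih_id a s env : (a < 3)%nat -> env AS = s -> (s = 1 \/ s = -1) ->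
  eval env (BIH a) = eval env (TGT a).
Proof.
  intros Ha H [-> | ->];
  (destruct a as [|[|[|a]]]; [ | | | lia]);
  (match goal with |- eval _ (BIH ?a) = _ => crunch (BIH a); crunch (TGT a) end);
  cbn [eval]; rewrite H; field.
Qed.

Lemma ne_id a env : (a < 3)%nat -> eval env (NE a) = eval env (Mul qE (E3 a)).
Proof.
  intros Ha. destruct a as [|[|[|a]]]; [ | | | lia];
  (match goal with |- eval _ (NE ?a) = _ => crunch (NE a) end);
  cbn [eval E3 qE AE BE]; field.
Qed.

Theorem proposition5p1 (sg : R) (lo hi : option R) (lam f h : R -> R) (b c : R) :
  (sg = 1 \/ sg = -1) ->
  interval_nonempty lo hi ->
  smooth_on lo hi lam -> smooth_on lo hi f -> smooth_on lo hi h ->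
  (forall z, in_I lo hi z -> 0 < lam z) ->
  (exists z1 z2, in_I lo hi z1 /\ in_I lo hi z2 /\ lam z1 <> lam z2) ->
  in_I lo hi c ->
  (proper_biharmonic_curve sg lam f h (gamma_bc b c) <->
   (deriv lam c <> 0 /\
    lam c * deriv (deriv lam) c - 2 * (deriv lam c) ^ 2
      - 8 * (lam c) ^ 2 * (1 + sg * lam c) = 0)).
Proof.
  intros Hsg _ Hl Hf Hh Hp _ Hc.
  assert (HH : Hyp lo hi lam f h) by (repeat split; auto).
  pose proof (vel_rep sg lam f h b c) as RT.
  pose proof (cov_rep sg lo hi lam f h b c _ _ HH Hc RT) as RN.
  pose proof (cov_rep sg lo hi lam f h b c _ _ HH Hc RN) as RN2.
  pose proof (cov_rep sg lo hi lam f h b c _ _ HH Hc RN2) as RN3.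
  pose proof (curv_rep sg lo hi lam f h b c _ _ _ _ _ _ HH Hc RN RT RT) as RC.
  set (qv := deriv lam c * / (2 * lam c)).
  set (Kv := deriv (deriv lam) c * / (2 * lam c) + deriv lam c * - (2 * deriv lam c * (/ (2 * lam c) * / (2 * lam c)))
             - 2 * (qv * qv) - 4 - 4 * sg * lam c).
  assert (Hlc : 0 < lam c) by auto.
  assert (BH : forall s a, (a < 3)%nat ->
     cov_along sg lam f h (gamma_bc b c) (cov_along sg lam f h (gamma_bc b c)
       (cov_along sg lam f h (gamma_bc b c) (velocity (gamma_bc b c)))) s a
     + curv sg lam f h (cov_along sg lam f h (gamma_bc b c) (velocity (gamma_bc b c)) s)
         (velocity (gamma_bc b c) s) (velocity (gamma_bc b c) s) (gamma_bc b c s) a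
     = qv * Kv * eval (env3 sg lam f h b s c) (E3 a)).
  { intros s a Ha. rewrite RN3, RC by exact Ha. transitivity (eval (env3 sg lam f h b s c) (BIH a)).
    { unfold BIH, NE. exact (eq_sym (eval_sadd _ _ _)). }
    rewrite (bih_id a sg) by auto. unfold qv, Kv. cbn [eval dexpr datom sadd smul sopp env3 fn Nat.iter qE KE TGT]. change (Nat.iter 1 deriv lam c) with (deriv lam c); change (Nat.iter 2 deriv lam c) with (deriv (deriv lam) c); change (Nat.iter 0 deriv lam c) with (lam c). unfold qv. ring. }
  assert (GE : forall s a, (a < 3)%nat ->
     cov_along sg lam f h (gamma_bc b c) (velocity (gamma_bc b c)) s a
     = qv * eval (env3 sg lam f h b s c) (E3 a)).
  { intros s a Ha. rewrite RN by exact Ha. change (CovE TE) with NE.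
    rewrite ne_id by exact Ha. unfold qv. cbn [eval env3 fn Nat.iter qE]. change (Nat.iter 1 deriv lam c) with (deriv lam c). ring. }
  assert (KC : Kv * (2 * lam c ^ 2) = lam c * deriv (deriv lam) c - 2 * (deriv lam c) ^ 2
      - 8 * (lam c) ^ 2 * (1 + sg * lam c)).
  { unfold Kv, qv. field. lra. }
  assert (QC : qv <> 0 <-> deriv lam c <> 0).
  { unfold qv. split; intros H1 H2; apply H1.
    - rewrite H2; ring.
    - apply Rmult_integral in H2. destruct H2 as [H2|H2]; auto.
      exfalso; apply (Rinv_neq_0_compat (2 * lam c)); [lra|exact H2]. }
  unfold proper_biharmonic_curve, biharmonic_curve, geodesic_curve. cbv zeta.
  split.
  - intros [HB HG].
    assert (Hq : qv <> 0).
    { intro Hq0. apply HG. intros s a Ha. rewrite GE by exact Ha. rewrite Hq0; ring. }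
    split; [apply QC; exact Hq|].
    pose proof (HB 0 2%nat ltac:(lia)) as H2. rewrite BH in H2 by lia.
    cbn [eval E3] in H2. rewrite <- KC.
    assert (Kv = 0).
    { apply Rmult_integral in H2. destruct H2 as [H2|H2]; [|lra].
      apply Rmult_integral in H2. destruct H2; [contradiction|auto]. }
    rewrite H; ring.
  - intros [Hd Hcond].
    assert (Hq : qv <> 0) by (apply QC; exact Hd).
    assert (HK : Kv = 0).
    { rewrite <- KC in Hcond. apply Rmult_integral in Hcond. destruct Hcond as [H|H]; auto.
      exfalso. assert (0 < lam c ^ 2) by (apply pow_lt; lra). lra. }
    split.
    + intros s a Ha. rewrite BH by exact Ha. rewrite HK; ring.
    + intro HG. apply Hq. pose proof (HG 0 2%nat ltac:(lia)) as H2. rewrite GE in H2 by lia.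
      cbn [eval E3] in H2. lra.
Qed.
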